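(* Let $R^*=\sup\{R(\theta_0,s):\theta_0\in[0,\bar\theta),\ s\in\mathcal S(\theta_0)\}$, where $R(\theta_0,s)=\int_{\theta_0}^{\bar\theta}J(\theta)s(\theta)\,dF(\theta)+v(\theta_0)(1-F(\theta_0))$, and let $$R_1=\sup_{\theta\in[0,\bar\theta)}\Big(\theta\,\tfrac{1+F(\theta)}{2}+v(\theta)\Big)\big(1-F(\theta)\big)$$ be the maximal revenue from selling a single positional good (all participants pooled at one level). Then $R_1\ge \tfrac12 R^*$. No regularity assumption on $F$ (such as monotonicity of $J$) is required.
   Context: Let $0<\bar\theta<\infty$, $\Theta=[0,\bar\theta]$, $F$ a cdf on $\Theta$ with continuous, strictly positive density $f$, $dF=f\,d\theta$, and $J(\theta)=\theta-\frac{1-F(\theta)}{f(\theta)}$. The intrinsic value $v:\Theta\to[0,\infty)$ is twice continuously differentiable with $v'\ge0$, $v''\le0$. For $\theta_0\in[0,\bar\theta)$ and bounded measurable $a,b:[\theta_0,\bar\theta]\to\mathbb R$, write $b\in\mathrm{MPS}(a)$ on $[\theta_0,\bar\theta]$ if $\int_x^{\bar\theta}b\,dF\le\int_x^{\bar\theta}a\,dF$ for all $x\in[\theta_0,\bar\theta]$, with equality at $x=\theta_0$. Let $\mathcal S(\theta_0)$ be the set of nondecreasing $s:[\theta_0,\bar\theta]\to[0,1]$ with $s\in\mathrm{MPS}(F)$ on $[\theta_0,\bar\theta]$. $R(\theta_0,s)$ is the seller's expected revenue from the mechanism with participation cutoff $\theta_0$ and interim status $s$, where a buyer of type $\theta$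 paying $p$ for status $\sigma$ gets $\theta\sigma-p+v(\theta)$. *)

(* Defs.v *)
From Stdlib Require Import Reals Lra.
From Coquelicot Require Import Coquelicot.
Open Scope R_scope.

Definition Jvv (F f : R -> R) (t : R) : R := t - (1 - F t) / f t.

Definition MPS (f : R -> R) (t0 tb : R) (b a : R -> R) : Prop :=
  (forall x, t0 <= x <= tb ->
     RInt (fun t => b t * f t) x tb <= RInt (fun t => a t * f t) x tb) /\
  RInt (fun t => b t * f t) t0 tb = RInt (fun t => a t * f t) t0 tb.

Definition Sadm (F f : R -> R) (tb t0 : R) (s : R -> R) : Prop :=
  (forall x y, t0 <= x -> x <= y -> y <= tb -> s x <= s y) /\
  (forall x, t0 <= x <= tb -> 0 <= s x <= 1) /\
  MPS f t0 tb s F.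

Definition Rev (F f v : R -> R) (tb t0 : R) (s : R -> R) : R :=
  RInt (fun t => Jvv F f t * s t * f t) t0 tb + v t0 * (1 - F t0).

Definition Rstar (F f v : R -> R) (tb : R) : Rbar :=
  Lub_Rbar (fun r => exists t0 s, 0 <= t0 < tb /\ Sadm F f tb t0 s /\
                                  r = Rev F f v tb t0 s).

Definition Rone (F v : R -> R) (tb : R) : Rbar :=
  Lub_Rbar (fun r => exists t, 0 <= t < tb /\
                       r = (t * ((1 + F t) / 2) + v t) * (1 - F t)).

(* Main.v *)
Require Import Defs.
From Stdlib Require Import Reals Lra Lia.
From Coquelicot Require Import Coquelicot.
Open Scope R_scope.

Definition clamp (a b t : R) := Rmax a (Rmin b t).

Lemma clamp_in a b t : a <= b -> a <= clamp a b t <= b.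
Proof. intros; unfold clamp, Rmax, Rmin; repeat destruct Rle_dec; lra. Qed.
Lemma clamp_id a b t : a <= t <= b -> clamp a b t = t.
Proof. intros; unfold clamp, Rmax, Rmin; repeat destruct Rle_dec; lra. Qed.
Lemma clamp_mono a b x y : a <= b -> x <= y -> clamp a b x <= clamp a b y.
Proof. intros; unfold clamp, Rmax, Rmin; repeat destruct Rle_dec; lra. Qed.
Lemma clamp_lip a b x y : a <= b -> Rabs (clamp a b x - clamp a b y) <= Rabs (x - y).
Proof. intros; unfold clamp, Rmax, Rmin; repeat destruct Rle_dec;
  unfold Rabs; repeat destruct Rcase_abs; lra. Qed.

Lemma clamp_cont a b x : a <= b -> continuous (clamp a b) x.
Proof.
  intros Hab. apply continuity_pt_filterlim.
  intros e He. exists e; split; [exact He|].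
  intros y [_ Hy]. simpl in *. unfold R_dist in *.
  eapply Rle_lt_trans; [apply clamp_lip; exact Hab| exact Hy].
Qed.

Lemma RInt_plus_eq (x y : R) : plus x y = x + y.
Proof. reflexivity. Qed.
Lemma R_minus_eq (x y : R) : minus x y = x - y.
Proof. reflexivity. Qed.
Lemma R_scal_eq (x y : R) : scal x y = x * y.
Proof. reflexivity. Qed.

Lemma step_int (Phi Phi' g : R -> R) (a b y : R) : a <= b ->
  (forall x, is_derive Phi x (Phi' x)) -> (forall x, continuous Phi' x) ->
  (forall x z, a <= x -> x <= z -> z <= b -> g x <= g z) ->
  exists m, a <= m <= b /\
    is_RInt (fun t => Phi' t * (if Rle_dec y (g t) then 1 else 0)) a b (Phi b - Phi m).
Proof.
  intros Hab HD HC Hg.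
  set (E := fun t => t = a \/ (a <= t <= b /\ g t < y)).
  assert (HB : bound E). { exists b. intros t [->|Ht]; lra. }
  assert (HE : exists x, E x) by (exists a; left; reflexivity).
  destruct (completeness E HB HE) as [m [Hub Hlub]].
  assert (Ham : a <= m) by (apply Hub; left; reflexivity).
  assert (Hmb : m <= b) by (apply Hlub; intros t [->|Ht]; lra).
  exists m; split; [lra|].
  assert (H1 : is_RInt (fun t => Phi' t * (if Rle_dec y (g t) then 1 else 0)) a m 0).
  { apply is_RInt_ext with (fun _ => 0).
    - intros t Ht. rewrite Rmin_left in Ht by lra. rewrite Rmax_right in Ht by lra.
      cbv beta; destruct Rle_dec as [Hy|Hy]; [|rewrite Rmult_0_r; reflexivity].
      exfalso.
      assert (~ is_upper_bound E t) as Hn.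
      { intros Hu. specialize (Hlub t Hu). lra. }
      apply Hn. intros e He. apply Rnot_lt_le. intros Hte.
      destruct He as [->|[He1 He2]]; [lra|].
      assert (g t <= g e) by (apply Hg; lra). lra.
    - pose proof (@is_RInt_const R_NormedModule a m 0) as Hc.
      rewrite R_scal_eq, Rmult_0_r in Hc. exact Hc. }
  assert (H2 : is_RInt (fun t => Phi' t * (if Rle_dec y (g t) then 1 else 0)) m b (Phi b - Phi m)).
  { apply is_RInt_ext with Phi'.
    - intros t Ht. rewrite Rmin_left in Ht by lra. rewrite Rmax_right in Ht by lra.
      cbv beta; destruct Rle_dec as [Hy|Hy]; [rewrite Rmult_1_r; reflexivity|].
      exfalso. assert (E t) as Et by (right; split; lra).
      specialize (Hub t Et). lra.
    - rewrite <- R_minus_eq. exact (is_RInt_derive Phi Phi' m b (fun x _ => HD x) (fun x _ => HC x)). }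
  pose proof (is_RInt_Chasles _ _ _ _ _ _ H1 H2) as H.
  rewrite RInt_plus_eq, Rplus_0_l in H. exact H.
Qed.

Fixpoint Qs (g : R -> R) (N : nat) (t : R) : R :=
  match N with
  | O => 0
  | S k => Qs g k t + (if Rle_dec (INR (S k)) (g t) then 1 else 0)
  end.

Lemma Q_int (Phi Phi' g : R -> R) (a b : R) : a <= b ->
  (forall x, is_derive Phi x (Phi' x)) -> (forall x, continuous Phi' x) ->
  (forall x z, a <= x -> x <= z -> z <= b -> g x <= g z) ->
  forall N, exists I, is_RInt (fun t => Phi' t * Qs g N t) a b I /\
    (forall K, (forall x, a <= x <= b -> Phi x - Phi b <= K) -> - I <= INR N * K).
Proof.
  intros Hab HD HC Hg N. induction N as [|N [I [HI HK]]].
  - exists 0. split.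
    + apply is_RInt_ext with (fun _ => 0).
      * intros t _. simpl. rewrite Rmult_0_r; reflexivity.
      * pose proof (@is_RInt_const R_NormedModule a b 0) as Hc.
        rewrite R_scal_eq, Rmult_0_r in Hc. exact Hc.
    + intros K _. simpl. lra.
  - destruct (step_int Phi Phi' g a b (INR (S N)) Hab HD HC Hg) as [m [Hm Hs]].
    exists (I + (Phi b - Phi m)). split.
    + pose proof (is_RInt_plus _ _ _ _ _ _ HI Hs) as H.
      rewrite RInt_plus_eq in H.
      eapply is_RInt_ext; [|exact H].
      intros t _. simpl. rewrite RInt_plus_eq. ring.
    + intros K HK'. specialize (HK K HK'). specialize (HK' m Hm).
      rewrite S_INR. lra.
Qed.

Lemma Q_approx (g : R -> R) (t : R) : 0 <= g t -> forall N,
  (INR N <= g t -> Qs g N t = INR N) /\ (g t < INR N -> Qs g N t <= g t < Qs g N t + 1).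
Proof.
  intros H0. induction N as [|N [IH1 IH2]].
  - simpl. split; [reflexivity| lra].
  - change (Qs g (S N) t) with (Qs g N t + (if Rle_dec (INR (S N)) (g t) then 1 else 0)).
    rewrite S_INR in *. split.
    + intros H. rewrite IH1 by lra. destruct Rle_dec; [ring| lra].
    + intros H. destruct Rle_dec as [H'|H']; [lra|].
      destruct (Rle_dec (INR N) (g t)) as [H2|H2].
      * rewrite IH1 by lra. lra.
      * specialize (IH2 ltac:(lra)). lra.
Qed.

Lemma unif_bound (c q st m d : R) : Rabs c <= m -> Rabs (q - st) <= d ->
  Rabs (c * q - c * st) <= m * d.
Proof.
  intros H1 H2. rewrite <- Rmult_minus_distr_l, Rabs_mult.
  apply Rmult_le_compat; auto using Rabs_pos.
Qed.

Lemma key (a b : R) (Phi Phi' s : R -> R) : a <= b ->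
  (forall x, is_derive Phi x (Phi' x)) -> (forall x, continuous Phi' x) ->
  (forall x z, a <= x -> x <= z -> z <= b -> s x <= s z) ->
  (forall x, a <= x <= b -> 0 <= s x <= 1) ->
  ex_RInt (fun t => Phi' t * s t) a b /\
  (forall K, (forall x, a <= x <= b -> Phi x - Phi b <= K) ->
     - RInt (fun t => Phi' t * s t) a b <= K).
Proof.
  intros Hab HD HC Hs Hs01.
  set (st := fun t => s (clamp a b t)).
  set (ct := fun t => Phi' (clamp a b t)).
  assert (Hst : forall x z, x <= z -> st x <= st z).
  { intros x z Hxz. unfold st. pose proof (clamp_in a b x Hab). pose proof (clamp_in a b z Hab).
    apply Hs; try lra. apply clamp_mono; lra. }
  assert (Hst01 : forall x, 0 <= st x <= 1).
  { intros x. apply Hs01. apply clamp_in; lra. }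
  set (gn := fun (n : nat) t => INR (S n) * st t).
  assert (Hgn : forall n x z, a <= x -> x <= z -> z <= b -> gn n x <= gn n z).
  { intros n x z _ Hxz _. unfold gn. apply Rmult_le_compat_l; [apply pos_INR|]. auto. }
  set (fn := fun (n : nat) t => ct t * (Qs (gn n) (S n) t / INR (S n))).
  set (hn := fun n => RInt (fn n) a b).
  assert (Hfn : forall n, is_RInt (fn n) a b (hn n) /\
    (forall K, (forall x, a <= x <= b -> Phi x - Phi b <= K) -> - hn n <= K)).
  { intros n.
    destruct (Q_int Phi Phi' (gn n) a b Hab HD HC (Hgn n) (S n)) as [I [HI HK]].
    assert (HSn : 0 < INR (S n)) by (apply lt_0_INR; lia).
    assert (HI' : is_RInt (fn n) a b (I / INR (S n))).
    { pose proof (is_RInt_scal _ _ _ (/ INR (S n)) _ HI) as H.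
      rewrite R_scal_eq in H. replace (I / INR (S n)) with (/ INR (S n) * I) by (unfold Rdiv; ring).
      eapply is_RInt_ext; [|exact H].
      intros t Ht. rewrite Rmin_left in Ht by lra. rewrite Rmax_right in Ht by lra.
      change (/ INR (S n) * (Phi' t * Qs (gn n) (S n) t) = Phi' (clamp a b t) * (Qs (gn n) (S n) t / INR (S n))). rewrite clamp_id by lra. unfold Rdiv. ring. }
    assert (Hh : hn n = I / INR (S n)) by (apply is_RInt_unique; exact HI').
    split; [rewrite Hh; exact HI'|].
    intros K HK'. specialize (HK K HK'). rewrite Hh.
    apply Rmult_le_reg_l with (INR (S n)); [exact HSn|].
    replace (INR (S n) * - (I / INR (S n))) with (- I) by (field; lra). lra. }
  destruct (ex_RInt_ub Phi' a b (ex_RInt_continuous Phi' a b (fun z _ => HC z))) as [M HM].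
  set (M' := Rabs M + 1).
  assert (HM' : 0 < M') by (unfold M'; pose proof (Rabs_pos M); lra).
  assert (Hct : forall t, Rabs (ct t) <= M').
  { intros t. unfold ct. pose proof (clamp_in a b t Hab).
    pose proof (HM (clamp a b t) ltac:(rewrite Rmin_left, Rmax_right; lra)) as Hn0.
    unfold M'. pose proof (Rle_abs M). change (norm (Phi' (clamp a b t))) with (Rabs (Phi' (clamp a b t))) in Hn0. lra. }
  assert (Happ : forall n t, Rabs (Qs (gn n) (S n) t / INR (S n) - st t) <= / INR (S n)).
  { intros n t.
    assert (HSn : 0 < INR (S n)) by (apply lt_0_INR; lia).
    assert (H0 : 0 <= gn n t) by (unfold gn; pose proof (Hst01 t); apply Rmult_le_pos; lra).
    destruct (Q_approx (gn n) t H0 (S n)) as [A1 A2].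
    pose proof (Hst01 t) as [B1 B2].
    unfold gn in *.
    destruct (Rle_dec (INR (S n)) (INR (S n) * st t)) as [C|C].
    - rewrite A1 by exact C.
      assert (st t = 1).
      { apply Rle_antisym; [lra|]. apply Rmult_le_reg_l with (INR (S n)); lra. }
      rewrite H. replace (INR (S n) / INR (S n) - 1) with 0 by (field; lra).
      rewrite Rabs_R0. left. apply Rinv_0_lt_compat; lra.
    - specialize (A2 ltac:(lra)).
      set (q := Qs (fun t0 => INR (S n) * st t0) (S n) t) in *.
      replace (q / INR (S n) - st t) with (- ((INR (S n) * st t - q) / INR (S n))) by (field; lra).
      rewrite Rabs_Ropp, Rabs_right.
      + unfold Rdiv. rewrite <- (Rmult_1_l (/ INR (S n))) at 2.
        apply Rmult_le_compat_r; [left; apply Rinv_0_lt_compat; lra| lra].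
      + apply Rle_ge. unfold Rdiv. apply Rmult_le_pos; [lra| left; apply Rinv_0_lt_compat; lra]. }
  assert (Huni : filterlim fn eventually (locally (fun t => ct t * st t))).
  { intros P [eps HP].
    assert (He : 0 < eps / M') by (apply Rdiv_lt_0_compat; [apply cond_pos| exact HM']).
    destruct (archimed_cor1 (eps / M') He) as [N [HN HN0]].
    exists N. intros n Hn. apply HP. intros t.
    change (Rabs (fn n t - ct t * st t) < eps).
    unfold fn.
    eapply Rle_lt_trans; [apply unif_bound; [apply Hct| apply Happ]|].
    assert (HSn : INR N <= INR (S n)) by (apply le_INR; lia).
    assert (H0N : 0 < INR N) by (apply lt_0_INR; lia).
    assert (/ INR (S n) <= / INR N) by (apply Rinv_le_contravar; lra).
    apply Rle_lt_trans with (M' * / INR N).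
    + apply Rmult_le_compat_l; lra.
    + apply Rmult_lt_reg_l with (/ M'). apply Rinv_0_lt_compat; lra.
      replace (/ M' * (M' * / INR N)) with (/ INR N) by (field; lra).
      replace (/ M' * eps) with (eps / M') by (unfold Rdiv; ring). exact HN. }
  destruct (filterlim_RInt fn a b eventually eventually_filter (fun t => ct t * st t) hn
              (fun n => proj1 (Hfn n)) Huni) as [If [Hlim HIf]].
  assert (HIf' : is_RInt (fun t => Phi' t * s t) a b If).
  { eapply is_RInt_ext; [|exact HIf].
    intros t Ht. rewrite Rmin_left in Ht by lra. rewrite Rmax_right in Ht by lra.
    unfold ct, st. rewrite clamp_id by lra. reflexivity. }
  split; [exists If; exact HIf'|].
  intros K HK. rewrite (is_RInt_unique _ _ _ _ HIf').
  apply Rnot_lt_le. intros Hc.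
  assert (Heps : 0 < (- If - K) / 2) by lra.
  destruct (Hlim _ (locally_ball If (mkposreal _ Heps))) as [N HN].
  specialize (HN N (le_n N)).
  change (Rabs (hn N - If) < (- If - K) / 2) in HN.
  pose proof (proj2 (Hfn N) K HK).
  apply Rabs_def2 in HN. lra.
Qed.

Lemma cont_to_pt (g : R -> R) x : continuous g x -> continuity_pt g x.
Proof. intros H; apply continuity_pt_filterlim; exact H. Qed.

Lemma core (tb : R) (F f v : R -> R) (t0 r1 : R) (s : R -> R) :
  0 < tb ->
  (forall x, 0 <= x <= tb -> continuous f x) ->
  (forall x, 0 <= x <= tb -> 0 < f x) ->
  (forall x, 0 <= x <= tb -> F x = RInt f 0 x) ->
  F tb = 1 ->
  (forall x, 0 <= x <= tb -> 0 <= v x) ->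
  (forall x y, 0 <= x -> x <= y -> y <= tb -> v x <= v y) ->
  (forall t, 0 <= t < tb -> (t * ((1 + F t) / 2) + v t) * (1 - F t) <= r1) ->
  0 <= t0 < tb -> Sadm F f tb t0 s ->
  Rev F f v tb t0 s <= 2 * r1.
Proof.
  intros Htb Hfc Hfp HF HF1 Hv0 Hvm Hr1 Ht0 [Hsm [Hs01 [_ HMPS]]].
  set (ft := fun t => f (clamp 0 tb t)).
  assert (Hftc : forall x, continuous ft x).
  { intros x. unfold ft. apply continuous_comp; [apply clamp_cont; lra|].
    apply Hfc. apply clamp_in; lra. }
  set (G := fun x => RInt ft 0 x).
  assert (HGd : forall x, is_derive G x (ft x)).
  { intros x. apply is_derive_RInt with 0; [|apply Hftc].
    apply filter_forall. intros y. apply RInt_correct.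
    apply (ex_RInt_continuous (V := R_CompleteNormedModule)). intros; apply Hftc. }
  assert (HGF : forall x, 0 <= x <= tb -> G x = F x).
  { intros x Hx. rewrite HF by lra. unfold G. apply RInt_ext.
    intros y Hy. rewrite Rmin_left in Hy by lra. rewrite Rmax_right in Hy by lra.
    unfold ft. rewrite clamp_id by lra. reflexivity. }
  assert (HGc : forall x, continuity_pt G x).
  { intros x. apply cont_to_pt. apply (ex_derive_continuous (V := R_NormedModule)). exists (ft x). apply HGd. }
  assert (HF01 : forall x, 0 <= x <= tb -> 0 <= F x <= 1).
  { intros x Hx. rewrite HF by lra. split.
    - apply RInt_ge_0; [lra| |].
      + apply (ex_RInt_continuous (V := R_CompleteNormedModule)). intros z Hz. rewrite Rmin_left in Hz by lra.
        rewrite Rmax_right in Hz by lra. apply Hfc; lra.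
      + intros; left; apply Hfp; lra.
    - rewrite <- HF1, HF by lra.
      assert (Hex : forall a b, 0 <= a <= b -> b <= tb -> ex_RInt f a b).
      { intros a b Hab Hb. apply (ex_RInt_continuous (V := R_CompleteNormedModule)). intros z Hz. rewrite Rmin_left in Hz by lra.
        rewrite Rmax_right in Hz by lra. apply Hfc; lra. }
      rewrite <- (RInt_Chasles f 0 x tb) by (apply Hex; lra).
      assert (0 <= RInt f x tb).
      { apply RInt_ge_0; [lra| apply Hex; lra| intros; left; apply Hfp; lra]. }
      change (plus (RInt f 0 x) (RInt f x tb)) with (RInt f 0 x + RInt f x tb). lra. }
  destruct Ht0 as [Ht0a Ht0b].
  set (v0 := v t0).
  set (Phi := fun t => t * (1 - G t) + 2 * v0 * (1 - G t)).
  set (Phi' := fun t => (1 - G t) - t * ft t - 2 * v0 * ft t).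
  assert (HPd : forall x, is_derive Phi x (Phi' x)).
  { intros x. unfold Phi. auto_derive.
    - repeat split; exists (ft x); apply HGd.
    - replace (Derive (fun x0 : R => G x0) x) with (ft x) by (symmetry; apply is_derive_unique; apply HGd). unfold Phi'. ring. }
  assert (HPc : forall x, continuous Phi' x).
  { intros x. apply continuity_pt_filterlim.
    change (continuity_pt ((fct_cte 1 - G) - (id * ft) - (fct_cte (2 * v0) * ft))%F x).
    pose proof (cont_to_pt _ _ (Hftc x)).
    assert (Hc1 : forall c, continuity_pt (fct_cte c) x) by (intros c; apply continuity_pt_const; intros ? ?; reflexivity).
    assert (Hid : continuity_pt id x) by apply continuity_pt_id.
    apply continuity_pt_minus; [apply continuity_pt_minus|apply continuity_pt_mult; auto].
    - apply continuity_pt_minus; auto.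
    - apply continuity_pt_mult; auto. }
  assert (Hsm' : forall x z, t0 <= x -> x <= z -> z <= tb -> s x <= s z) by exact Hsm.
  destruct (key t0 tb Phi Phi' s ltac:(lra) HPd HPc Hsm' Hs01) as [Hex1 Hb1].
  assert (HftD : forall x, is_derive G x (ft x)) by exact HGd.
  destruct (key t0 tb G ft s ltac:(lra) HftD Hftc Hsm' Hs01) as [Hex2 _].
  assert (HB : RInt (fun t => ft t * s t) t0 tb = (1 - F t0 * F t0) / 2).
  { rewrite (RInt_ext _ (fun t => s t * f t)).
    2: { intros x Hx. rewrite Rmin_left in Hx by lra. rewrite Rmax_right in Hx by lra.
         unfold ft. rewrite clamp_id by lra. apply Rmult_comm. }
    rewrite HMPS.
    apply is_RInt_unique.
    assert (Hd : forall x, is_derive (fun t => G t * G t / 2) x (G x * ft x)).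
    { intros x. auto_derive.
      - repeat split; exists (ft x); apply HGd.
      - replace (Derive (fun x0 : R => G x0) x) with (ft x) by (symmetry; apply is_derive_unique; apply HGd). field. }
    assert (Hc : forall x, continuous (fun t => G t * ft t) x).
    { intros x. apply continuity_pt_filterlim.
      change (continuity_pt (G * ft)%F x). apply continuity_pt_mult; auto.
      apply cont_to_pt, Hftc. }
    pose proof (is_RInt_derive (V := R_CompleteNormedModule) (fun t => G t * G t / 2) (fun t => G t * ft t) t0 tb
                  (fun x _ => Hd x) (fun x _ => Hc x)) as H.
    rewrite R_minus_eq in H. rewrite !HGF in H by lra. rewrite HF1 in H.
    replace ((1 - F t0 * F t0) / 2) with (1 * 1 / 2 - F t0 * F t0 / 2) by field.
    eapply is_RInt_ext; [|exact H].
    intros x Hx. rewrite Rmin_left in Hx by lra. rewrite Rmax_right in Hx by lra.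
    cbv beta. rewrite HGF by lra. unfold ft. rewrite clamp_id by lra. reflexivity. }
  unfold Rev. fold v0.
  set (A := RInt (fun t => Phi' t * s t) t0 tb).
  assert (HR : RInt (fun t => Jvv F f t * s t * f t) t0 tb = - A - 2 * v0 * ((1 - F t0 * F t0) / 2)).
  { rewrite <- HB. apply is_RInt_unique.
    pose proof (is_RInt_scal _ _ _ (-1) _ (RInt_correct _ _ _ Hex1)) as H1.
    pose proof (is_RInt_scal _ _ _ (-2 * v0) _ (RInt_correct _ _ _ Hex2)) as H2.
    pose proof (is_RInt_plus _ _ _ _ _ _ H1 H2) as H.
    change (is_RInt (fun y => plus (scal (-1) (Phi' y * s y)) (scal (-2 * v0) (ft y * s y))) t0 tb (-1 * A + -2 * v0 * RInt (fun t => ft t * s t) t0 tb)) in H.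
    replace (- A - 2 * v0 * RInt (fun t => ft t * s t) t0 tb) with
      (-1 * A + -2 * v0 * RInt (fun t => ft t * s t) t0 tb) by ring.
    eapply is_RInt_ext; [|exact H].
    intros x Hx. rewrite Rmin_left in Hx by lra. rewrite Rmax_right in Hx by lra.
    change (-1 * (Phi' x * s x) + -2 * v0 * (ft x * s x) = Jvv F f x * s x * f x).
    unfold Phi', Jvv, ft. rewrite HGF by lra. rewrite clamp_id by lra.
    assert (f x <> 0) by (apply Rgt_not_eq, Hfp; lra).
    field; auto. }
  rewrite HR.
  assert (HK : - A <= 2 * r1).
  { apply Hb1. intros x Hx.
    assert (HPtb : Phi tb = 0) by (unfold Phi; rewrite HGF, HF1 by lra; ring).
    rewrite HPtb. unfold Phi. rewrite HGF by lra.
    pose proof (HF01 x ltac:(lra)) as [F0 F1].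
    assert (Hr0 : 0 <= r1).
    { pose proof (Hr1 0 ltac:(lra)) as H0. pose proof (HF01 0 ltac:(lra)).
      rewrite HF in H0 by lra. rewrite RInt_point in H0. replace (@zero R_CompleteNormedModule) with 0 in H0 by reflexivity.
      pose proof (Hv0 0 ltac:(lra)). lra. }
    destruct (Req_dec x tb) as [->|Hxt].
    - rewrite HF1. lra.
    - pose proof (Hr1 x ltac:(lra)) as H.
      assert (Hvx : v0 <= v x) by (apply Hvm; lra).
      assert (0 <= x * F x * (1 - F x)) by (apply Rmult_le_pos; [apply Rmult_le_pos|]; lra).
      assert (0 <= (v x - v0) * (1 - F x)) by (apply Rmult_le_pos; lra).
      nra. }
  pose proof (HF01 t0 ltac:(lra)) as [F0 F1].
  assert (0 <= v0 * F t0 * (1 - F t0)).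
  { apply Rmult_le_pos; [apply Rmult_le_pos|]; try lra. apply Hv0; lra. }
  nra.
Qed.

Theorem proposition2 (tb : R) (F f v : R -> R) :
  0 < tb ->
  (* f continuous and strictly positive density on [0, tb]; F its cdf *)
  (forall x, 0 <= x <= tb -> continuous f x) ->
  (forall x, 0 <= x <= tb -> 0 < f x) ->
  (forall x, 0 <= x <= tb -> F x = RInt f 0 x) ->
  F tb = 1 ->
  (* v : Theta -> [0,oo), C^2, v' >= 0, v'' <= 0 *)
  (exists v1 v2 : R -> R,
     forall x, 0 <= x <= tb ->
       is_derive v x (v1 x) /\ is_derive v1 x (v2 x) /\ continuous v2 x /\
       0 <= v x /\ 0 <= v1 x /\ v2 x <= 0) ->
  Rbar_le (Rbar_mult (/ 2) (Rstar F f v tb)) (Rone F v tb).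
Proof.
  intros Htb Hfc Hfp HF HF1 [v1 [v2 Hv]].
  assert (Hv0 : forall x, 0 <= x <= tb -> 0 <= v x) by (intros x Hx; apply Hv; exact Hx).
  assert (Hvm : forall x y, 0 <= x -> x <= y -> y <= tb -> v x <= v y).
  { intros x y Hx Hxy Hy. destruct (Req_dec x y) as [->|Hne]; [lra|].
    destruct (MVT_gen v x y v1) as [c [Hc Heq]].
    - intros z Hz. rewrite Rmin_left in Hz by lra. rewrite Rmax_right in Hz by lra.
      apply Hv; lra.
    - intros z Hz. rewrite Rmin_left in Hz by lra. rewrite Rmax_right in Hz by lra.
      apply cont_to_pt. apply (ex_derive_continuous (V := R_NormedModule)).
      exists (v1 z). apply Hv; lra.
    - rewrite Rmin_left in Hc by lra. rewrite Rmax_right in Hc by lra.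
      assert (0 <= v1 c) by (apply Hv; lra).
      assert (0 <= v1 c * (y - x)) by (apply Rmult_le_pos; lra). lra. }
  pose proof (Lub_Rbar_correct (fun r => exists t, 0 <= t < tb /\
                       r = (t * ((1 + F t) / 2) + v t) * (1 - F t))) as [Hub1 _].
  unfold Rone. 
  destruct (Lub_Rbar (fun r => exists t, 0 <= t < tb /\
                       r = (t * ((1 + F t) / 2) + v t) * (1 - F t))) as [r1| |] eqn:Hr.
  - assert (Hr1 : forall t, 0 <= t < tb -> (t * ((1 + F t) / 2) + v t) * (1 - F t) <= r1).
    { intros t Ht. apply (Hub1 _ (ex_intro _ t (conj Ht eq_refl))). }
    unfold Rstar.
    pose proof (Lub_Rbar_correct (fun r => exists t0 s, 0 <= t0 < tb /\ Sadm F f tb t0 s /\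
                                  r = Rev F f v tb t0 s)) as [_ Hlub].
    assert (HL : Rbar_le (Lub_Rbar (fun r => exists t0 s, 0 <= t0 < tb /\ Sadm F f tb t0 s /\
                                  r = Rev F f v tb t0 s)) (2 * r1)).
    { apply Hlub. intros r [t0 [s [Ht0 [Hs ->]]]]. simpl.
      apply (core tb F f v t0 r1 s); auto. }
    revert HL. generalize (Lub_Rbar (fun r => exists t0 s, 0 <= t0 < tb /\ Sadm F f tb t0 s /\
                                  r = Rev F f v tb t0 s)).
    intros L HL. destruct L as [L| |]; simpl in HL |- *.
    + lra.
    + destruct HL.
    + destruct (Rle_dec 0 (/ 2)) as [H|H]; [|lra].
      destruct (Rle_lt_or_eq_dec 0 (/ 2) H) as [H'|H']; [exact I|lra].
  - destruct (Rbar_mult _ _); simpl; exact I.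
  - exfalso. specialize (Hub1 _ (ex_intro _ 0 (conj (conj (Rle_refl 0) Htb) eq_refl))).
    exact Hub1.
Qed.
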